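(* Let $k$ be a field and $s,t$ indeterminates over $k$. For $i\geq 1$ let $\tau_i=(-1)^i\left(t^i+st^{i-1}+\dots+s^{i-1}t+s^i\right)\in k[s,t]$. (i) For every $i\geq 1$, let $\overline{A}_i$ be the $i\times(i+2)$ matrix over $k[s,t]$ whose $r$-th row ($1\le r\le i$) has entry $s$ in column $r$, entry $-(t+s)$ in column $r+1$, entry $t$ in column $r+2$, and $0$ elsewhere, and let $B_i$ be the $i\times i$ submatrix of $\overline{A}_i$ obtained by deleting its first and last columns. Then $\det B_i=\tau_i$. (ii) Let $\mathcal{S}$ be an infinite set of positive integers. Suppose that either $k$ has characteristic zero, or $k$ has prime characteristic $p$ and $\mathcal{S}$ contains infinitely many integers of the form $p^m-2$ ($m$ a positive integer). Then the set of irreducible factors in $k[s,t]$ of the polynomials $\tau_i$, $i\in\mathcal{S}$, is infinite. *)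

(* Defs.v *)
(* k[s,t] is modelled as {poly {poly k}}:
   s = 'X%:P (the inner variable, embedded as a constant), t = 'X (outer variable). *)
From HB Require Import structures.
From mathcomp Require Import all_boot all_order all_algebra.
Set Implicit Arguments. Unset Strict Implicit. Unset Printing Implicit Defensive.
Import Order.TTheory GRing.Theory Num.Theory.
Local Open Scope ring_scope.

Section Defs.
Variable k : fieldType.

Definition Rst := {poly {poly k}}.
Definition s_var : {poly {poly k}} := ('X)%:P.
Definition t_var : {poly {poly k}} := 'X.

Definition tau (i : nat) : {poly {poly k}} :=
  (-1) ^+ i * \sum_(j < i.+1) t_var ^+ (i - j) * s_var ^+ j.

Definition Abar (i : nat) : 'M[{poly {poly k}}]_(i, i.+2) :=
  \matrix_(r < i, c < i.+2)
    (if (c : nat) == r then s_var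
     else if (c : nat) == r.+1 then - (t_var + s_var)
     else if (c : nat) == r.+2 then t_var
     else 0).

Definition Bmat (i : nat) : 'M[{poly {poly k}}]_i :=
  \matrix_(r < i, c < i) Abar i r (@inord i.+1 c.+1).
End Defs.

Definition rdvd (R : comRingType) (a b : R) : Prop := exists c : R, b = a * c.

Definition ring_irreducible (R : idomainType) (p : R) : Prop :=
  p != 0 /\ p \isn't a GRing.unit /\
  forall a b : R, p = a * b -> a \is a GRing.unit \/ b \is a GRing.unit.

Definition associated (R : comRingType) (a b : R) : Prop := rdvd a b /\ rdvd b a.

(* Main.v *)
Require Import Defs.
From HB Require Import structures.
From mathcomp Require Import all_boot all_order all_algebra.
From mathcomp Require Import all_field.
From mathcomp Require Import ring zify.
From Stdlib Require Import Classical.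
Set Implicit Arguments. Unset Strict Implicit. Unset Printing Implicit Defensive.
Import Order.TTheory GRing.Theory Num.Theory.
Local Open Scope ring_scope.

Section Trid.
Variables (R : comRingType) (a b c : R).
Definition trid n : 'M[R]_n := \matrix_(i < n, j < n)
  (if j.+1 == i then b else if (j : nat) == i then a else if (j:nat) == i.+1 then c else 0).

Lemma det_lastcol n (A : 'M[R]_n.+1) :
  (forall i : 'I_n.+1, i != ord_max -> A i ord_max = 0) ->
  \det A = A ord_max ord_max * \det (row' ord_max (col' ord_max A)).
Proof.
move=> H; rewrite (expand_det_col _ ord_max) (bigD1 ord_max) //= big1 ?addr0.
  by rewrite /cofactor -signr_odd addnn odd_double expr0 mul1r.
by move=> i /H ->; rewrite mul0r.
Qed.

Lemma trid_rec n : \det (trid n.+2) = a * \det (trid n.+1) - b * c * \det (trid n).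
Proof.
rewrite (expand_det_row _ ord_max) !big_ord_recr /= big1 ?add0r; last first.
  move=> j _; rewrite !mxE /=.
  have := ltn_ord j => hj.
  rewrite ifF; last by apply/eqP => h; move: hj; rewrite h ltnn.
  rewrite ifF; last by apply/eqP => h; move: hj; rewrite h; lia.
  rewrite ifF; last by apply/eqP => h; move: hj; rewrite h; lia.
  by rewrite mul0r.
rewrite !mxE /= (eqxx n.+1).
have -> : (n.+2 == n.+1) = false by lia.
rewrite /cofactor.
have -> : row' ord_max (col' ord_max (trid n.+2)) = trid n.+1.
  apply/matrixP => i j; rewrite !mxE /=.
  move: (ltn_ord i) (ltn_ord j) => /= hi hj.
  by rewrite /bump (leqNgt n.+1 i) (leqNgt n.+1 j) hi hj /= !add0n.
have -> : \det (row' ord_max (col' (widen_ord (leqnSn n.+1) ord_max) (trid n.+2))) = c * \det (trid n).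
  rewrite det_lastcol.
    congr (_ * _).
      rewrite !mxE /= /bump leqnn ltnn add1n add0n.
      have -> : (n.+2 == n) = false by lia.
      have -> : (n.+1 == n) = false by lia.
      by rewrite (eqxx n.+1).
    congr (\det _); apply/matrixP => i j; rewrite !mxE /=.
    have B : forall m x, (x < m)%N -> bump m x = x by move=> m x h; rewrite /bump leqNgt h.
    move: (ltn_ord i) (ltn_ord j) => /= hi hj.
    by rewrite !B // ?(ltn_trans hi) ?(ltn_trans hj).
  move=> i hi; rewrite !mxE /= /bump leqnn add1n.
  have hin : (i : nat) <> n by move=> h; move/eqP: hi; apply; apply/val_inj.
  have hi' : (i < n)%N by move: (ltn_ord i); rewrite ltnS leq_eqVlt => /orP[/eqP h|//].
  rewrite ltnNge (ltnW hi') add0n. 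
  rewrite (gtn_eqF (leqW (leqW hi'))) (gtn_eqF (leqW hi')) eqSS.
  by rewrite (gtn_eqF hi').
rewrite -[(-1) ^+ (_ + widen_ord _ _)]signr_odd -[(-1) ^+ (_ + ord_max)]signr_odd !oddD /= addbb addNb addbb /= expr1 expr0.
ring.
Qed.
End Trid.

Section Part1.
Variable k : fieldType.
Local Notation s := (s_var k).
Local Notation t := (t_var k).

Lemma Bmat_trid n : Bmat k n = trid (- (t + s)) s t n.
Proof.
apply/matrixP => i j; rewrite !mxE inordK; last by rewrite !ltnS ltnW.
by rewrite eqSS.
Qed.

Lemma tms_neq0 : t - s != 0.
Proof. by rewrite /t_var /s_var -size_poly_eq0 size_XsubC. Qed.

Lemma tau_mul n : (t - s) * tau k n = (-1) ^+ n * (t ^+ n.+1 - s ^+ n.+1).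
Proof. by rewrite subrXX /tau mulrCA. Qed.

Lemma tau_rec n : tau k n.+2 = - (t + s) * tau k n.+1 - s * t * tau k n.
Proof.
apply: (mulfI tms_neq0).
rewrite mulrBr tau_mul (mulrCA (t - s) (- (t + s))) (mulrCA (t - s) (s * t)) !tau_mul.
rewrite !exprS; ring.
Qed.

Lemma part1 i : (1 <= i)%N -> \det (Bmat k i) = tau k i.
Proof.
move=> _.
have H : forall n, \det (Bmat k n) = tau k n /\ \det (Bmat k n.+1) = tau k n.+1.
  elim=> [|n [IH1 IH2]].
    rewrite !Bmat_trid det_mx00 det_mx11 !mxE /= /tau !big_ord_recr !big_ord0 /=.
    by rewrite !expr0 !expr1 ?subnn; split; ring.
  split=> //; rewrite Bmat_trid trid_rec -!Bmat_trid IH1 IH2 tau_rec; ring.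
by case: (H i).
Qed.
End Part1.

Lemma key (K : fieldType) (Q L : seq {poly K}) (G : {poly K}) :
  separable_poly G -> G %| \prod_(x <- Q) x ->
  (forall x, x \in Q -> exists2 y, y \in L & x %| y) -> G %| \prod_(y <- L) y.
Proof.
elim: Q G => [|x Q IH] G sepG.
  by rewrite big_nil => H _; exact: dvdp_trans H (dvd1p _).
rewrite big_cons => HG HQ.
set d := gcdp G x.
have dG : d %| G := dvdp_gcdl _ _.
set G' := G %/ d.
have EG : G = G' * d by rewrite /G' divpK.
have sepG' : separable_poly G'.
  by apply: dvdp_separable sepG; rewrite [X in _ %| X]EG dvdp_mulIl.
have cdG' : coprimep d G' by apply: (separable_coprime sepG); rewrite [X in _ %| X]EG mulrC dvdpp.
have cG'x : coprimep G' x.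
  apply/coprimepP => h hG' hx.
  have hd : h %| d by rewrite dvdp_gcd hx (dvdp_trans hG') // [X in _ %| X]EG dvdp_mulIl.
  by move/coprimepP: cdG'; apply.
have HG' : G' %| \prod_(y <- Q) y.
  rewrite -(Gauss_dvdpr _ cG'x); apply: dvdp_trans HG.
  by rewrite [X in _ %| X]EG dvdp_mulIl.
have IH' := IH G' sepG' HG' (fun y hy => HQ y (ltac:(by rewrite inE hy orbT))).
have [y yL xy] := HQ x (mem_head _ _).
have dL : d %| \prod_(y <- L) y.
  apply: dvdp_trans (dvdp_gcdr G x) _; apply: dvdp_trans xy _.
  by rewrite (big_rem y) //= dvdp_mulIl.
by rewrite EG mulrC Gauss_dvdp // dL IH'.
Qed.

Section Fact.
Variable k : fieldType.
Local Notation P2 := {poly {poly k}}.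

Definition meas (p : P2) := (size p + size (lead_coef p))%N.

Lemma meas_big (a : P2) : a != 0 -> a \isn't a GRing.unit -> (2 < meas a)%N.
Proof.
move=> a0 au; rewrite /meas ltnNge; apply/negP => hle; move/negP: au; apply.
have s1 : (0 < size a)%N by rewrite size_poly_gt0.
have l0 : lead_coef a != 0 by rewrite lead_coef_eq0.
have s2 : (0 < size (lead_coef a))%N by rewrite size_poly_gt0.
have sa : size a = 1%N by lia.
have sl : size (lead_coef a) = 1%N by lia.
rewrite poly_unitE sa eqxx /=.
have -> : a`_0 = lead_coef a by rewrite lead_coefE sa.
rewrite poly_unitE sl eqxx /= unitfE.
have -> : (lead_coef a)`_0 = lead_coef (lead_coef a) by rewrite [RHS]lead_coefE sl.
by rewrite lead_coef_eq0.
Qed.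

Lemma meas_mul (a b : P2) : a != 0 -> b != 0 -> meas (a * b) = (meas a + meas b - 2)%N.
Proof.
move=> a0 b0; rewrite /meas size_mul // lead_coefM size_mul ?lead_coef_eq0 //.
have h1 : (0 < size a)%N by rewrite size_poly_gt0.
have h2 : (0 < size b)%N by rewrite size_poly_gt0.
have h3 : (0 < size (lead_coef a))%N by rewrite size_poly_gt0 lead_coef_eq0.
have h4 : (0 < size (lead_coef b))%N by rewrite size_poly_gt0 lead_coef_eq0.
move: h1 h2 h3 h4; case: (size a) => [|x] //; case: (size b) => [|y] //.
case: (size (lead_coef a)) => [|z] //; case: (size (lead_coef b)) => [|w] // _ _ _ _.
rewrite !addSn !addnS /=; lia.
Qed.

Lemma factor_exists (p : P2) : p != 0 ->
  exists fs : seq P2, exists u : P2, u \is a GRing.unit /\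
    (forall q, q \in fs -> ring_irreducible q) /\ p = u * \prod_(q <- fs) q.
Proof.
have [n] := ubnP (meas p); elim: n p => // n IH p Hlt p0.
case: (boolP (p \is a GRing.unit)) => pu.
  by exists [::], p; rewrite big_nil mulr1.
case: (classic (ring_irreducible p)) => pirr.
  exists [:: p], 1; split; first exact: unitr1.
  by split; [move=> q; rewrite inE => /eqP -> | rewrite big_seq1 mul1r].
have [a [b [Eab nab]]] : exists a b, p = a * b /\ ~ (a \is a GRing.unit \/ b \is a GRing.unit).
  apply: NNPP => H; apply: pirr; split=> //; split=> // a b Eab.
  by apply: NNPP => H'; apply: H; exists a, b.
have a0 : a != 0 by apply: contraNneq p0 => a0; rewrite Eab a0 mul0r.
have b0 : b != 0 by apply: contraNneq p0 => b0; rewrite Eab b0 mulr0.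
have au : a \isn't a GRing.unit by apply/negP => h; apply: nab; left.
have bu : b \isn't a GRing.unit by apply/negP => h; apply: nab; right.
have ma := meas_big a0 au; have mb := meas_big b0 bu.
have mp := meas_mul a0 b0; rewrite -Eab in mp.
have [fa [ua [uau [fai Ea]]]] := IH a ltac:(lia) a0.
have [fb [ub [ubu [fbi Eb]]]] := IH b ltac:(lia) b0.
exists (fa ++ fb), (ua * ub); split; first by rewrite unitrM uau ubu.
split; first by move=> q; rewrite mem_cat => /orP[/fai|/fbi].
by rewrite big_cat /= Eab Ea Eb; ring.
Qed.
End Fact.

Section Part2.
Variable k : fieldType.
Local Notation phi := (map_poly (horner_eval (1 : k)) : {poly {poly k}} -> {poly k}).
Definition S1 (i : nat) : {poly k} := \sum_(j < i.+1) 'X ^+ (i - j) * (1 : {poly k}) ^+ j.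

Lemma phi_tau i : phi (tau k i) = (-1) ^+ i * S1 i.
Proof.
rewrite /tau rmorphM rmorph_sign rmorph_sum; congr (_ * _).
apply: eq_bigr => j _; rewrite rmorphM !rmorphXn /t_var /s_var /= map_polyX map_polyC /=.
by rewrite horner_evalE hornerX polyC1.
Qed.

Lemma F_eq i : 'X ^+ i.+1 - 1 = ('X - 1) * S1 i.
Proof. by rewrite /S1 -subrXX expr1n. Qed.

Lemma sepF n : (n.+1)%:R != 0 :> k -> separable_poly ('X ^+ n.+1 - 1 : {poly k}).
Proof.
move=> cn; rewrite separable_poly.unlock derivB derivXn -polyC1 derivC subr0 /=.
apply/Bezout_coprimepP; exists (-1, (n.+1%:R)^-1 *: 'X) => /=.
rewrite -scaler_nat -scalerAl -scalerAr scalerA mulVf // scale1r -exprS polyC1.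
by rewrite mulN1r opprB subrK eqpxx.
Qed.

Lemma size_S1 i : size (S1 i) = i.+1.
Proof.
have hF : size ('X ^+ i.+1 - 1 : {poly k}) = i.+2 by rewrite -polyC1 size_XnsubC.
have hX : size ('X - 1 : {poly k}) = 2 by rewrite -polyC1 size_XsubC.
have S0 : S1 i != 0.
  by apply: contra_eqN hF => /eqP h; rewrite F_eq h mulr0 size_poly0.
have X0 : ('X - 1 : {poly k}) != 0 by rewrite -size_poly_eq0 hX.
rewrite F_eq (size_mul X0 S0) hX in hF.
by case: hF.
Qed.

Lemma part2 (S : nat -> Prop) :
     (forall i, S i -> (0 < i)%N) ->
     (forall N : nat, exists i, (N < i)%N /\ S i) ->
     ([pchar k] =i pred0 \/
      exists p : nat, p \in [pchar k] /\
        (forall N : nat, exists m : nat, (N < m)%N /\ S (p ^ m - 2)%N)) ->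
     ~ exists l : seq {poly {poly k}},
         forall q : {poly {poly k}},
           ring_irreducible q ->
           (exists i, S i /\ rdvd q (tau k i)) ->
           exists r, r \in l /\ associated q r.
Proof.
move=> Spos Sinf Hch [l Hl].
set L := [seq x <- map phi l | x != 0].
set P := \prod_(y <- L) y.
have P0 : P != 0.
  rewrite prodf_seq_neq0; apply/allP => x; rewrite mem_filter => /andP[].
  by move=> ->.
have [i [Si [iP ci]]] : exists i, S i /\ (size P < i)%N /\ (i.+1)%:R != 0 :> k.
  case: Hch => [H0|[p [pch Hp]]].
    have [i [hi Si]] := Sinf (size P); exists i; split => //; split => //.
    by move/pcharf0P: H0 => ->.
  have pp := pcharf_prime pch; have p2 := prime_gt1 pp.
  have [m [hm Sm]] := Hp (size P).+2.
  have hmp := ltn_expl m p2.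
  exists (p ^ m - 2)%N; split => //; split; first lia.
  rewrite (_ : (p ^ m - 2).+1 = p ^ m - 1)%N; last lia.
  rewrite natrB; last lia.
  rewrite natrX (pcharf0 pch) expr0n.
  have -> : (m == 0%N) = false by lia.
  by rewrite /= sub0r oppr_eq0 oner_eq0.
have S0 : S1 i != 0 by rewrite -size_poly_eq0 size_S1.
have tau0 : tau k i != 0.
  apply: contra_neq S0 => h.
  have := phi_tau i; rewrite h rmorph0 => /esym /eqP.
  by rewrite mulf_eq0 signr_eq0 /= => /eqP.
have [fs [u [uu [fsi Et]]]] := factor_exists tau0.
have pu0 : phi u != 0.
  apply/eqP => h; have := rmorph_unit (map_poly (horner_eval (1:k))) uu.
  by rewrite /= h unitr0.
have Ephi : (-1) ^+ i * S1 i = phi u * \prod_(q <- fs) phi q.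
  by rewrite -phi_tau Et rmorphM rmorph_prod.
set Q := map phi fs.
have EQ : \prod_(x <- Q) x = (phi u)^-1 * ((-1) ^+ i * S1 i).
  by rewrite Ephi big_map mulKr // rmorph_unit.
have Q0 : \prod_(x <- Q) x != 0.
  by rewrite EQ !mulf_neq0 ?invr_eq0 ?signr_eq0.
have HG : S1 i %| \prod_(x <- Q) x by rewrite EQ mulrA dvdp_mull // dvdpp.
have HQ : forall x, x \in Q -> exists2 y, y \in L & x %| y.
  move=> x /mapP [q qfs ->].
  have dv : rdvd q (tau k i).
    by exists (u * \prod_(z <- rem q fs) z); rewrite Et (big_rem q qfs) /=; ring.
  have [r [rl [[c1 Ec1] [c2 Ec2]]]] := Hl q (fsi q qfs) (ex_intro _ i (conj Si dv)).
  have pq0 : phi q != 0.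
    apply: contra_neq Q0 => h.
    by rewrite (big_rem (phi q)) ?map_f //= h mul0r.
  exists (phi r).
    rewrite mem_filter map_f // andbT.
    by apply: contra_neq pq0 => h; rewrite Ec2 rmorphM /= h mul0r.
  by rewrite Ec1 rmorphM dvdp_mulIl.
have sep : separable_poly (S1 i).
  by apply: dvdp_separable (sepF ci); rewrite F_eq dvdp_mulIr.
have SP := key sep HG HQ.
have := dvdp_leq P0 SP; rewrite size_S1 => h; have := leq_ltn_trans h iP.
by rewrite ltnNge leqnSn.
Qed.
End Part2.

Unset Implicit Arguments.

Theorem lemma1p1 (k : fieldType) :
  (forall i : nat, (1 <= i)%N -> \det (Bmat k i) = tau k i) /\
  (forall S : nat -> Prop,
     (forall i, S i -> (0 < i)%N) ->
     (forall N : nat, exists i, (N < i)%N /\ S i) ->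
     ([pchar k] =i pred0 \/
      exists p : nat, p \in [pchar k] /\
        (forall N : nat, exists m : nat, (N < m)%N /\ S (p ^ m - 2)%N)) ->
     ~ exists l : seq {poly {poly k}},
         forall q : {poly {poly k}},
           ring_irreducible q ->
           (exists i, S i /\ rdvd q (tau k i)) ->
           exists r, r \in l /\ associated q r).
Proof.
split; [exact: part1 | exact: part2].
Qed.
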